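(* Let $N\ge2$, $\rho\in(0,1)\setminus\{\tfrac12\}$, $f<0$, $g<0$, and $\nu=i\omega$ with $\omega\in\mathbb{R}\setminus\{0\}$. Then for every $k\in\{1,\dots,N\}$, whenever the denominator below is nonzero, $$a_k(\nu)=\kappa^k\,\frac{(\mu_+-\mu_+^{-1})\mu_+^{N-k}-(\mu_--\mu_-^{-1})\mu_-^{N-k}}{(\mu_+-\mu_+^{-1})\mu_+^{N}-(\mu_--\mu_-^{-1})\mu_-^{N}},$$ where $\mu_\pm=\mu_\pm(\nu)$.
   Context: Model and $a_k$: agents $0,\dots,N$ with deviations $z_k$, leader $z_0$ prescribed; for $1\le i\le N-1$, $\ddot z_i=f\{z_i-(1-\rho)z_{i-1}-\rho z_{i+1}\}+g\{\dot z_i-(1-\rho)\dot z_{i-1}-\rho\dot z_{i+1}\}$; $\ddot z_N=f\{z_N-z_{N-1}\}+g\{\dot z_N-\dot z_{N-1}\}$. Written as $\dot z=Mz+\Gamma_0(t)$ with $z=(z_1,\dot z_1,\dots,z_N,\dot z_N)^T$, $M=I_N\otimes A+P\otimes K$, $A=\begin{pmatrix}0&1\\0&0\end{pmatrix}$, $K=\begin{pmatrix}0&0\\ f&g\end{pmatrix}$, $P=I_N-Q_\rho$ ($Q_\rho$: zero diagonal, $(Q_\rho)_{i,i+1}=\rho$ for $1\le i\le N-1$, $(Q_\rho)_{i,i-1}=1-\rho$ for $2\le i\le N-1$, $(Q_\rho)_{N,N-1}=1$, else $0$). For $\nu\in i\mathbb{R}$ not an eigenvalue of $M$, $a(\nu)=-(M-\nu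 I)^{-1}g_0(\nu)$ with $g_0(\nu)=-(1-\rho)(f+g\nu)e_2$, and $a_k(\nu)$ is the $(2k-1)$-th entry of $a(\nu)$ (the steady-state amplitude of $z_k$ when $z_0(t)=e^{\nu t}$). Notation: $\kappa=\frac{1-\rho}{\rho}$; $\gamma(\nu)=\frac{f+g\nu-\nu^2}{f+g\nu}$; $\mu_\pm(\nu)=\frac{1}{2\rho}\left(\gamma\pm\sqrt{\gamma^2-4\rho(1-\rho)}\right)$, the two roots of $\rho\mu^2-\gamma\mu+(1-\rho)=0$. Branch convention: for $w\neq0$, $\sqrt w$ is the square root of $w$ whose argument lies in $[0,\pi)$ (branch cut along the positive real axis). *)

(* Defs.v *)
(* Complex numbers: an arbitrary numClosedFieldType C
   (e.g. algC); the square root is MathComp's sqrtC = 2.-root, whose value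
   is the root with argument in [0, pi) -- the paper's branch convention. *)
From HB Require Import structures.
From mathcomp Require Import all_boot all_order all_algebra.
Set Implicit Arguments. Unset Strict Implicit. Unset Printing Implicit Defensive.
Import Order.TTheory GRing.Theory Num.Theory.
Local Open Scope ring_scope.

(* ---- Kronecker product, with the index (a, b) of 'I_m * 'I_n encoded as a*n+b ---- *)
Lemma kron_div_lt (m n : nat) (i : 'I_(m * n)) : (i %/ n < m)%N.
Proof.
have := ltn_ord i; move: (nat_of_ord i) => x; clear i.
case: n => [|n]; first by rewrite muln0.
by move=> hi; rewrite ltn_divLR.
Qed.

Lemma kron_mod_lt (m n : nat) (i : 'I_(m * n)) : (i %% n < n)%N.
Proof.
have := ltn_ord i; move: (nat_of_ord i) => x; clear i.
case: n => [|n]; first by rewrite muln0.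
by move=> _; rewrite ltn_pmod.
Qed.

Definition kron_hi (m n : nat) (i : 'I_(m * n)) : 'I_m := Ordinal (kron_div_lt i).
Definition kron_lo (m n : nat) (i : 'I_(m * n)) : 'I_n := Ordinal (kron_mod_lt i).

Definition kronmx (R : pzRingType) (m1 n1 m2 n2 : nat)
  (X : 'M[R]_(m1, n1)) (Y : 'M[R]_(m2, n2)) : 'M[R]_(m1 * m2, n1 * n2) :=
  \matrix_(i, j) (X (kron_hi i) (kron_hi j) * Y (kron_lo i) (kron_lo j)).

Section Platoon.
Variables (C : numClosedFieldType) (N : nat) (rho f g : C).

Definition Amx : 'M[C]_2 := \matrix_(i, j) (if (i == 0%N :> nat) && (j == 1%N :> nat) then 1 else 0).
Definition Kmx : 'M[C]_2 :=
  \matrix_(i, j) (if i == 1%N :> nat then (if j == 0%N :> nat then f else g) else 0).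

(* Q_rho with 1-based indices i, j (0-based ordinals shifted by one) *)
Definition Qrho : 'M[C]_N := \matrix_(i, j)
  (let i1 := i.+1 in let j1 := j.+1 in
   if (1 <= i1 <= N.-1)%N && (j1 == i1.+1) then rho
   else if (2 <= i1 <= N.-1)%N && (j1 == i1.-1) then 1 - rho
   else if (i1 == N) && (j1 == N.-1) then 1
   else 0).

Definition Pmx : 'M[C]_N := 1%:M - Qrho.

(* M = I_N (x) A + P (x) K, acting on z = (z_1, z_1', ..., z_N, z_N') *)
Definition Mmx : 'M[C]_(N * 2) := kronmx 1%:M Amx + kronmx Pmx Kmx.

Definition g0 (nu : C) : 'cV[C]_(N * 2) :=
  \col_i (if i == 1%N :> nat then - (1 - rho) * (f + g * nu) else 0).

Definition avec (nu : C) : 'cV[C]_(N * 2) := - (invmx (Mmx - nu%:M) *m g0 nu).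

(* a_k(nu): the (2k-1)-th (1-based) entry, i.e. 0-based index 2(k-1) *)
(* (for 1 <= k <= N this index is in range; out of range would give 0) *)
Definition a_k (k : nat) (nu : C) : C :=
  oapp (fun i : 'I_(N * 2) => avec nu i 0) 0 (insub (2 * k.-1)%N).
End Platoon.

Definition kappa (C : numClosedFieldType) (rho : C) : C := (1 - rho) / rho.
Definition gammaf (C : numClosedFieldType) (f g nu : C) : C :=
  (f + g * nu - nu ^+ 2) / (f + g * nu).
Definition mu_plus (C : numClosedFieldType) (rho f g nu : C) : C :=
  (gammaf f g nu + sqrtC (gammaf f g nu ^+ 2 - 4%:R * rho * (1 - rho))) / (2%:R * rho).
Definition mu_minus (C : numClosedFieldType) (rho f g nu : C) : C :=
  (gammaf f g nu - sqrtC (gammaf f g nu ^+ 2 - 4%:R * rho * (1 - rho))) / (2%:R * rho).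

(* Main.v *)
Require Import Defs.
From HB Require Import structures.
From mathcomp Require Import all_boot all_order all_algebra.
Import Order.TTheory GRing.Theory Num.Theory.
Local Open Scope ring_scope.
From Stdlib Require Import Ring Field Lia.

Lemma hidx_lt (n : nat) (p : 'I_n * 'I_2) : (p.1 * 2 + p.2 < n * 2)%N.
Proof.
case: p => [[a ha] [b hb]] /=.
apply: (@leq_trans (a * 2 + 2)%N); first by rewrite ltn_add2l.
by rewrite -mulSnr leq_mul2r ha orbT.
Qed.

Definition hidx (n : nat) (p : 'I_n * 'I_2) : 'I_(n * 2) := Ordinal (@hidx_lt n p).

Lemma hidx_hi n p : kron_hi (@hidx n p) = p.1.
Proof.
apply: val_inj => /=; case: p => [[a ha] [b hb]] /=.
by rewrite divnMDl // divn_small // addn0.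
Qed.

Lemma hidx_lo n p : kron_lo (@hidx n p) = p.2.
Proof.
apply: val_inj => /=; case: p => [[a ha] [b hb]] /=.
by rewrite modnMDl modn_small.
Qed.

Lemma hidx_inv n (j : 'I_(n * 2)) : @hidx n (kron_hi j, kron_lo j) = j.
Proof. by apply: val_inj => /=; rewrite -divn_eq. Qed.

Lemma hidx_bij n : bijective (@hidx n).
Proof.
exists (fun j => (kron_hi j, kron_lo j)).
  by case=> a b; rewrite hidx_hi hidx_lo.
exact: hidx_inv.
Qed.

Lemma sum_pair (R : nmodType) n (F : 'I_(n * 2) -> R) :
  \sum_j F j = \sum_(c < n) (F (@hidx n (c, ord0)) + F (@hidx n (c, ord_max))).
Proof.
rewrite (reindex (@hidx n)); last exact/onW_bij/hidx_bij.
have -> : \sum_(c < n) (F (@hidx n (c, ord0)) + F (@hidx n (c, ord_max)))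
   = \sum_(c < n) \sum_(d < 2) F (@hidx n (c, d)).
  apply: eq_bigr => c _; rewrite !big_ord_recl big_ord0 addr0.
  by congr (_ + F (hidx _ (c, _))); apply: val_inj.
rewrite pair_big /=; apply: eq_bigr; by case.
Qed.

Lemma kron_hidx (R : pzRingType) m1 n1 (X : 'M[R]_(m1, n1)) (Y : 'M[R]_2) p q :
  kronmx X Y (@hidx m1 p) (@hidx n1 q) = X p.1 q.1 * Y p.2 q.2.
Proof. by rewrite mxE !hidx_hi !hidx_lo. Qed.

Lemma if3_sum (R : nmodType) (B1 B2 B3 : bool) (x y z : R) :
  ~~ (B1 && B2) -> ~~ (B1 && B3) -> ~~ (B2 && B3) ->
  (if B1 then x else if B2 then y else if B3 then z else 0) =
  (if B1 then x else 0) + (if B2 then y else 0) + (if B3 then z else 0).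
Proof.
by case: B1; case: B2; case: B3 => //= _ _ _; rewrite ?addr0 ?add0r.
Qed.

Lemma Qrho_dec (C : numClosedFieldType) N (rho : C) (a c : 'I_N) :
  Qrho N rho a c =
  (if (1 <= a.+1 <= N.-1)%N && (c.+1 == a.+2) then rho else 0) +
  (if (2 <= a.+1 <= N.-1)%N && (c.+1 == a) then 1 - rho else 0) +
  (if (a.+1 == N) && (c.+1 == N.-1) then 1 else 0).
Proof.
rewrite mxE /=; apply: if3_sum.
- apply/negP => /andP[/andP[_ /eqP E1] /andP[_ /eqP E2]].
  by move: E1; rewrite E2 => /eqP; rewrite ltn_eqF.
- apply/negP => /andP[/andP[H _] /andP[/eqP E _]].
  have E1 : N.-1 = a by move/(congr1 predn): E.
  by move: H; rewrite E1 ltnn.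
- apply/negP => /andP[/andP[/andP[_ H] _] /andP[/eqP E _]].
  have E1 : N.-1 = a by move/(congr1 predn): E.
  by move: H; rewrite E1 ltnn.
Qed.

Lemma sum_ind (C : nmodType) n (b : bool) (m : nat) (v : C) (G : nat -> C)
  (mul : C -> C -> C) (mul0 : forall y, mul 0 y = 0) :
  \sum_(c < n) mul (if b && (c.+1 == m) then v else 0) (G c.+1) =
  if b && (0 < m <= n)%N then mul v (G m) else 0.
Proof.
case: b => /=; last by rewrite big1 // => c _; rewrite mul0.
case: m => [|m] /=.
  by rewrite big1 // => c _; rewrite mul0.
case: (ltnP m n) => hm.
  rewrite (bigD1 (Ordinal hm)) //= eqxx big1 ?addr0 // => c hc.
  rewrite eqSS ifF ?mul0 //; apply/negP => /eqP E.
  by move/negP: hc; apply; apply/eqP/val_inj.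
rewrite big1 // => c _; rewrite eqSS ifF ?mul0 //.
by apply/negP => /eqP E; move: (ltn_ord c); rewrite E ltnNge hm.
Qed.

Section Alg.
Context {C : numClosedFieldType}.
Definition addC (x y : C) : C := x + y.
Definition mulC (x y : C) : C := x * y.
Definition subC (x y : C) : C := x - y.
Definition oppC (x : C) : C := - x.
Definition invC (x : C) : C := x^-1.
Definition divC (x y : C) : C := x / y.
Definition expC (x : C) n : C := x ^+ n.
Definition zeroC : C := 0.
Definition oneC : C := 1.
Lemma Cring : ring_theory zeroC oneC addC mulC subC oppC (@eq C).
Proof.
rewrite /addC /mulC /subC /oppC /zeroC /oneC.
split=> *; rewrite ?add0r ?mul1r ?addrA ?mulrA ?mulrDl ?subrr //; try exact: addrC; exact: mulrC.
Qed.
Lemma Cfield : field_theory zeroC oneC addC mulC subC oppC divC invC (@eq C).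
Proof.
split; first exact Cring.
- by apply/eqP; rewrite oner_eq0.
- by [].
- by move=> x hx; rewrite /invC /mulC mulVf //; apply/eqP.
Qed.
Add Field Cf : Cfield.
Ltac canon := rewrite -?[(_ + _)%R]/(addC _ _) -?[(_ * _)%R]/(mulC _ _)
  -?[(- _)%R]/(oppC _) -?[(_^-1)%R]/(invC _) -?[(_ ^+ _)%R]/(expC _ _)
  -?[0%R]/zeroC -?[1%R]/oneC;
  match goal with |- ?a = ?b => change (@eq C a b) end.
Ltac nzs := repeat split; match goal with H : is_true (_ != _) |- _ => exact: (elimN eqP H) end.

Lemma two_nz : (1 + 1 : C) != 0.
Proof. by rewrite -mulr2n pnatr_eq0. Qed.

Lemma mu_sum (rho f g nu : C) : rho != 0 ->
  mu_plus rho f g nu + mu_minus rho f g nu = gammaf f g nu / rho.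
Proof.
move=> hr; rewrite /mu_plus /mu_minus mulr2n.
set G := gammaf f g nu; set r := sqrtC _.
have h2 := two_nz.
canon; field; nzs.
Qed.

Lemma mu_prod (rho f g nu : C) : rho != 0 ->
  mu_plus rho f g nu * mu_minus rho f g nu = (1 - rho) / rho.
Proof.
move=> hr; rewrite /mu_plus /mu_minus.
set G := gammaf f g nu; set r := sqrtC _.
have h4 : ((1 + 1) * (1 + 1) : C) != 0 by rewrite mulf_neq0 // two_nz.
have hrr : r * r = G * G - 4%:R * rho * (1 - rho) by rewrite -expr2 sqrtCK expr2.
have -> : (G + r) / (2%:R * rho) * ((G - r) / (2%:R * rho)) =
  (G * G - r * r) / ((1 + 1) * (1 + 1) * rho * rho).
  rewrite mulr2n; have h2 := two_nz; canon; field; nzs.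
rewrite hrr -[4%N]/(2 * 2)%N natrM mulr2n.
have h2 := two_nz; canon; field; nzs.
Qed.

Definition tseq (m1 m2 : C) (j : nat) : C :=
  (m1 - m1^-1) * m1 ^+ j - (m2 - m2^-1) * m2 ^+ j.

Lemma tseq_rec m1 m2 j :
  tseq m1 m2 j.+2 = (m1 + m2) * tseq m1 m2 j.+1 - m1 * m2 * tseq m1 m2 j.
Proof. rewrite /tseq !exprS; canon; ring. Qed.

Definition sseq (rho m1 m2 : C) N (k : nat) : C :=
  kappa rho ^+ k * (tseq m1 m2 (N - k) / tseq m1 m2 N).

Lemma sseq0 rho m1 m2 N : tseq m1 m2 N != 0 -> sseq rho m1 m2 N 0 = 1.
Proof. by move=> hD; rewrite /sseq subn0 expr0 mul1r divff. Qed.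

Lemma sseq_rec rho m1 m2 G N i :
  kappa rho = m1 * m2 -> G = rho * (m1 + m2) -> (i.+2 <= N)%N -> rho != 0 ->
  rho * sseq rho m1 m2 N i.+2 - G * sseq rho m1 m2 N i.+1
    + (1 - rho) * sseq rho m1 m2 N i = 0.
Proof.
move=> hk hG hi hr0.
have e1 : (N - i = (N - i.+2).+2)%N by rewrite -!subSn // ltnW.
have e2 : (N - i.+1 = (N - i.+2).+1)%N by rewrite -!subSn.
have hr : 1 - rho = rho * (m1 * m2).
  by rewrite -hk /kappa mulrC divfK.
rewrite /sseq e1 e2 tseq_rec hG hr hk !exprS.
set D := tseq m1 m2 N; set K := (m1 * m2) ^+ i.
canon; ring.
Qed.

Lemma sseq_bd rho m1 m2 G N :
  kappa rho = m1 * m2 -> G = rho * (m1 + m2) -> (1 <= N)%N ->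
  m1 != 0 -> m2 != 0 -> rho != 0 -> tseq m1 m2 N != 0 ->
  G * sseq rho m1 m2 N N = sseq rho m1 m2 N N.-1.
Proof.
move=> hk hG hN h1 h2 hr0 hD.
have hr : rho * (1 + m1 * m2) = 1.
  by rewrite -hk /kappa mulrDr mulr1 mulrCA divff // mulr1 addrC subrK.
have hP : 1 + m1 * m2 != 0.
  by apply/negP => /eqP E; move: hr; rewrite E mulr0 => /eqP; rewrite eq_sym oner_eq0.
have er : rho = (1 + m1 * m2)^-1 by apply: (mulIf hP); rewrite hr mulVf.
case: N hN hD => // n _ hD /=.
rewrite /sseq subnn subSnn hk hG /tseq expr1 !expr0 !mulr1 exprS.
set D := _ - _ * _ ^+ n.+1; set K := (m1 * m2) ^+ n.
have hD' : D != 0 by [].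
rewrite er !expr1; clearbody D K; canon; field; nzs.
Qed.

Lemma gam_F (f g nu : C) : f + g * nu != 0 ->
  (f + g * nu) * (1 - gammaf f g nu) = nu * nu.
Proof. move=> hF; rewrite /gammaf expr2; canon; field; nzs. Qed.

Ltac bsolve := repeat match goal with
 | |- context[(?x <= ?y)%N] => case: (@ssrnat.leP x y) => ?
 | |- context[(?x == ?y :> nat)] => case: (@eqP _ x y) => ?
 end; simpl; try done; unfold addn, muln in *; lia.

Ltac simpl_ifs := repeat match goal with
 |- context[if ?b then _ else _] =>
   (have -> : b = true by bsolve) || (have -> : b = false by bsolve)
 end.

Section Mat.
Variables (N : nat) (rho f g nu : C) (s : nat -> C).

Definition xvec : 'cV[C]_(N * 2) :=
  \col_i (if (kron_lo i == 1%N :> nat) then nu * s (kron_hi i).+1 else s (kron_hi i).+1).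

Lemma xvec_hidx p : xvec (@hidx N p) 0 =
  if (p.2 == 1%N :> nat) then nu * s p.1.+1 else s p.1.+1.
Proof. by rewrite mxE hidx_hi hidx_lo. Qed.

Lemma M_entry p q : Mmx N rho f g (@hidx N p) (@hidx N q) =
  (1%:M : 'M[C]_N) p.1 q.1 * Amx C p.2 q.2 + Pmx N rho p.1 q.1 * Kmx f g p.2 q.2.
Proof. by rewrite /Mmx [LHS]mxE !kron_hidx. Qed.

Lemma sum_delta n (a : 'I_n) (G : 'I_n -> C) :
  \sum_c (1%:M : 'M[C]_n) a c * G c = G a.
Proof.
rewrite (bigD1 a) //= mxE eqxx mulr1n mul1r big1 ?addr0 // => c hc.
by rewrite mxE eq_sym (negbTE hc) mulr0n mul0r.
Qed.

Lemma main_mx : (2 <= N)%N -> s 0 = 1 ->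
  (forall i, (i.+2 <= N)%N -> rho * s i.+2 - gammaf f g nu * s i.+1 + (1 - rho) * s i = 0) ->
  gammaf f g nu * s N = s N.-1 ->
  f + g * nu != 0 ->
  (Mmx N rho f g - nu%:M) *m xvec = - g0 N rho f g nu.
Proof.
move=> hN hs0 hrec hbd hF.
apply/matrixP => i j; rewrite [j]ord1 -[i]hidx_inv.
move: (kron_hi i) (kron_lo i) => a b {i j}.
rewrite mulmxBl mul_scalar_mx !mxE sum_pair.
under eq_bigr => c _ do rewrite !M_entry !xvec_hidx /=.
rewrite hidx_hi hidx_lo /=.
case: b => [[|[|b]] hb] //=.
- rewrite /Amx /Kmx !mxE /=.
  under eq_bigr => c _ do rewrite !mulr0 !addr0 mul0r add0r mulr1.
  rewrite (@sum_delta N a (fun c : 'I_N => nu * s c.+1)) subrr.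
  have -> : (a * 2 + 0 == 1)%N = false.
    apply/negP => /eqP E; have := congr1 odd E.
    by rewrite addn0 oddM /= andbF.
  by rewrite oppr0.
- rewrite /Amx /Kmx !mxE /=.
  rewrite (eq_bigr (fun c : 'I_N => (f + g * nu) * (Pmx N rho a c * s c.+1))); last first.
    by move=> c _; rewrite !mulr0 !add0r; canon; ring.
  rewrite -mulr_sumr.
  rewrite (eq_bigr (fun c : 'I_N => (1%:M : 'M[C]_N) a c * s c.+1 - Qrho N rho a c * s c.+1)); last first.
    move=> c _; rewrite /Pmx mxE mulrDl -mulNr; congr (_ + _ * _); by rewrite mxE.
  rewrite sumrB (@sum_delta N a (fun c : 'I_N => s c.+1)).
  under eq_bigr => c _ do rewrite Qrho_dec !mulrDl.
  rewrite !big_split /=.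
  rewrite !(@sum_ind C N _ _ _ (fun k => s k) (@GRing.mul C) (@mul0r C)).
  have HF := @gam_F f g nu hF.
  have /ssrnat.ltP hN' := hN.
  case: a => a ha /=; move/ssrnat.ltP: (ha) => ha'.
  case: a ha ha' => [|a] ha ha'.
  + simpl_ifs.
    have H := hrec 0 hN; rewrite hs0 in H.
    rewrite [nu * (nu * _)]mulrA -HF.
    apply/eqP; rewrite -subr_eq0; apply/eqP.
    transitivity (- (f + g * nu) * (rho * s 2 - gammaf f g nu * s 1 + (1 - rho) * 1)).
      by canon; ring.
    by rewrite H mulr0.
  + case: (ltnP a.+2 N) => hlt.
    * move/ssrnat.ltP: (hlt) => ?; simpl_ifs.
      have H := hrec a.+1 hlt.
      rewrite [nu * (nu * _)]mulrA -HF.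
      apply/eqP; rewrite -subr_eq0; apply/eqP.
      transitivity (- (f + g * nu) * (rho * s a.+3 - gammaf f g nu * s a.+2 + (1 - rho) * s a.+1)).
        by canon; ring.
      by rewrite H mulr0.
    * have eN : a.+2 = N by apply/eqP; rewrite eqn_leq ha hlt.
      move/ssrnat.leP: hlt => ?.
      simpl_ifs.
      rewrite eN -hbd [nu * (nu * _)]mulrA -HF.
      by canon; ring.
Qed.
End Mat.
End Alg.

Theorem mainTheorem4 (C : numClosedFieldType) (N : nat) (rho f g omega : C)
  (hN : (2 <= N)%N)
  (hrho_real : rho \is Num.real) (hrho0 : 0 < rho) (hrho1 : rho < 1)
  (hrho_half : rho != 2%:R^-1)
  (hf_real : f \is Num.real) (hf : f < 0)
  (hg_real : g \is Num.real) (hg : g < 0)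
  (homega_real : omega \is Num.real) (homega : omega != 0)
  (hnu : ~~ eigenvalue (Mmx N rho f g) ('i * omega))
  (k : nat) (hk1 : (1 <= k)%N) (hkN : (k <= N)%N) :
  let nu := 'i * omega in
  let mp := mu_plus rho f g nu in
  let mm := mu_minus rho f g nu in
  let den := (mp - mp^-1) * mp ^+ N - (mm - mm^-1) * mm ^+ N in
  den != 0 ->
  a_k N rho f g k nu =
    kappa rho ^+ k *
      (((mp - mp^-1) * mp ^+ (N - k) - (mm - mm^-1) * mm ^+ (N - k)) / den).
Proof.
move=> nu mp mm den hden.
have hr0 : rho != 0 := lt0r_neq0 hrho0.
have hr1 : 1 - rho != 0 by rewrite subr_eq0 gt_eqF.
have hF : f + g * nu != 0.
  apply/negP => /eqP E.
  have H1 : 'Re (f + 'i * (g * omega)) = f by rewrite Re_rect // rpredM.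
  rewrite mulrCA -/nu E in H1.
  by move: hf; rewrite -H1 raddf0 ltxx.
have hk : kappa rho = mp * mm by rewrite /mp /mm mu_prod.
have hG : gammaf f g nu = rho * (mp + mm) by rewrite /mp /mm mu_sum // mulrC divfK.
have hkap : kappa rho != 0 by rewrite /kappa mulf_neq0 ?invr_eq0.
have hmp : mp != 0 by apply/negP => /eqP E; move: hkap; rewrite hk E mul0r eqxx.
have hmm : mm != 0 by apply/negP => /eqP E; move: hkap; rewrite hk E mulr0 eqxx.
have hD : tseq mp mm N != 0 by [].
set s := sseq rho mp mm N.
have Hmx := @main_mx C N rho f g nu s hN (sseq0 rho _ _ _ hD)
  (fun i hi => sseq_rec _ _ _ _ _ i hk hG hi hr0) (sseq_bd _ _ _ _ _ hk hG (ltnW hN) hmp hmm hr0 hD) hF.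
have hunit : (Mmx N rho f g - nu%:M) \in unitmx.
  by move: hnu; rewrite /eigenvalue /eigenspace negbK kermx_eq0 row_free_unit.
have hav : avec N rho f g nu = xvec N nu s.
  by rewrite /avec -[g0 _ _ _ _ _]opprK -Hmx mulmxN opprK mulKmx.
rewrite /a_k hav.
case: insubP => [o _ ho | hno] /=.
  rewrite mxE /= ho mulnC modnMl /= mulnK //.
  by case: k hk1 hkN {ho} => // k.
exfalso; move/negP: hno; apply.
case: k hk1 hkN => // k _ hkN /=.
by rewrite mulnC ltn_mul2r /=.
Qed.
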